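(* Let $\overline\eta\in(-\frac{\pi}{2},\frac{\pi}{2})^m$ and $\overline V\in\mathbb{R}^n_{>0}$ satisfy $E(\overline\eta)\overline V=\overline E_{fd}$ and \[ E(\overline\eta)-\mathrm{diag}(\overline V)^{-1}|D|\Gamma(\overline V)\mathrm{diag}(\boldsymbol{\sin}(\overline\eta))\mathrm{diag}(\boldsymbol{\cos}(\overline\eta))^{-1}\mathrm{diag}(\boldsymbol{\sin}(\overline\eta))|D|^T\mathrm{diag}(\overline V)^{-1}>0. \quad (\ast) \] Then the function \[ W_2(\eta,\overline\eta,V,\overline V)=-\mathbf{1}_m^T\Gamma(V)\boldsymbol{\cos}(\eta)+\mathbf{1}_m^T\Gamma(\overline V)\boldsymbol{\cos}(\overline\eta)-(\Gamma(\overline V)\boldsymbol{\sin}(\overline\eta))^T(\eta-\overline\eta)-\overline E_{fd}^T(V-\overline V)+\tfrac12V^TFV-\tfrac12\overline V^TF\overline V, \] where $F$ is the diagonal matrix with $F_{ii}=\frac{1-B_{ii}(X_{di}-X'_{di})}{X_{di}-X'_{di}}$, has a strict local minimum (as a function of $(\eta,V)$) at $(\overline\eta,\overline V)$.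
   Context: Standing setup (power network model). $\mathcal{G}=(\mathcal{V},\mathcal{E})$ is a connected undirected graph with node set $\{1,\dots,n\}$ and $m$ edges; each edge $k=\{i,j\}$ is given an arbitrary orientation, and $D\in\mathbb{R}^{n\times m}$ is the incidence matrix: $d_{ik}=+1$ if $i$ is the positive end of edge $k$, $-1$ if $i$ is the negative end, $0$ otherwise. $|D|$ denotes the matrix of entrywise absolute values of $D$. $\mathbf{1}_n$ is the all-ones vector. For each edge $k=\{i,j\}$ there is a susceptance $B_{ij}=B_{ji}>0$; each node has a self-susceptance $B_{ii}<0$ with $|B_{ii}|>\sum_{j\in\mathcal{N}_i}|B_{ij}|$ ($\mathcal{N}_i$ the neighbours of $i$ in $\mathcal{G}$), and reactances $X_{di}>X'_{di}>0$. For $V\in\mathbb{R}^n$, $\Gamma(V)=\mathrm{diag}(\gamma_1,\dots,\gamma_m)$ with $\gamma_k=V_iV_jB_{ij}$ for edge $k=\{i,j\}$. For $\eta\in\mathbb{R}^m$, $E(\eta)\in\mathbb{R}^{n\times n}$ is the symmetric matrix with $E_{ii}=\frac{1-B_{ii}(X_{di}-X'_{di})}{X_{di}-X'_{di}}$, $E_{ij}=-B_{ij}\cos(\eta_k)$ if $k=\{i,j\}$ is an edge, and $E_{ij}=0$ otherwise. $\boldsymbol{\sin}$, $\boldsymbol{\cos}$ act componentwise. $M,A,T$ are diagonal positive definite $n\times n$ matrices ($A=\mathrm{diag}(A_i)$), and $\overline E_{fd}\in\mathbb{R}^n$ is a constant vector. The network dynamics, with input $u\in\mathbb{R}^n$ (power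 generation) and demand $P^l$, are \[ \dot\eta=D^T\omega,\quad M\dot\omega=u-D\Gamma(V)\boldsymbol{\sin}(\eta)-A\omega-P^l,\quad T\dot V=-E(\eta)V+\overline E_{fd},\quad y=\omega, \] with state $(\eta,\omega,V)\in\mathbb{R}^m\times\mathbb{R}^n\times\mathbb{R}^n$. *)

(* Defs.v *)
From Stdlib Require Import Reals Lra Bool.
Open Scope R_scope.

Fixpoint sumR (n : nat) (f : nat -> R) : R :=
  match n with O => 0 | S k => sumR k f + f k end.

(* Graph: nodes 0..n-1, edges 0..m-1; edge k is oriented from tl k (positive
   end) to hd k (negative end). *)
Definition is_graph (n m : nat) (tl hd : nat -> nat) : Prop :=
  (forall k, (k < m)%nat -> (tl k < n)%nat /\ (hd k < n)%nat /\ tl k <> hd k) /\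
  (* no parallel edges: E is a set of unordered pairs *)
  (forall k k', (k < m)%nat -> (k' < m)%nat ->
     ((tl k = tl k' /\ hd k = hd k') \/ (tl k = hd k' /\ hd k = tl k')) -> k = k').

Definition joins (tl hd : nat -> nat) (k i j : nat) : Prop :=
  (tl k = i /\ hd k = j) \/ (tl k = j /\ hd k = i).

Inductive reach (m : nat) (tl hd : nat -> nat) (i : nat) : nat -> Prop :=
| reach_refl : reach m tl hd i i
| reach_step : forall j l k, reach m tl hd i j -> (k < m)%nat ->
    joins tl hd k j l -> reach m tl hd i l.

Definition connected (n m : nat) (tl hd : nat -> nat) : Prop :=
  forall i j, (i < n)%nat -> (j < n)%nat -> reach m tl hd i j.

Definition Dinc (tl hd : nat -> nat) (i k : nat) : R :=
  if Nat.eqb i (tl k) then 1 else if Nat.eqb i (hd k) then -1 else 0.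
Definition absD (tl hd : nat -> nat) (i k : nat) : R := Rabs (Dinc tl hd i k).

Definition Fdiag (B : nat -> nat -> R) (Xd Xd' : nat -> R) (i : nat) : R :=
  (1 - B i i * (Xd i - Xd' i)) / (Xd i - Xd' i).

Definition gamma (tl hd : nat -> nat) (B : nat -> nat -> R) (V : nat -> R) (k : nat) : R :=
  V (tl k) * V (hd k) * B (tl k) (hd k).

Definition Emat (m : nat) (tl hd : nat -> nat) (B : nat -> nat -> R)
    (Xd Xd' : nat -> R) (eta : nat -> R) (i j : nat) : R :=
  if Nat.eqb i j then Fdiag B Xd Xd' i
  else sumR m (fun k =>
         if orb (andb (Nat.eqb (tl k) i) (Nat.eqb (hd k) j)) (andb (Nat.eqb (tl k) j) (Nat.eqb (hd k) i))
         then - B i j * cos (eta k) else 0).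

(* entry (i,j) of
   E(eta) - diag(V)^-1 |D| Gamma(V) diag(sin eta) diag(cos eta)^-1 diag(sin eta) |D|^T diag(V)^-1 *)
Definition Pmat (m : nat) (tl hd : nat -> nat) (B : nat -> nat -> R)
    (Xd Xd' : nat -> R) (eta V : nat -> R) (i j : nat) : R :=
  Emat m tl hd B Xd Xd' eta i j
  - / V i * sumR m (fun k => absD tl hd i k * gamma tl hd B V k * sin (eta k)
                              * / cos (eta k) * sin (eta k) * absD tl hd j k) * / V j.

Definition pos_def (n : nat) (P : nat -> nat -> R) : Prop :=
  (forall i j, (i < n)%nat -> (j < n)%nat -> P i j = P j i) /\
  (forall x : nat -> R, (exists i, (i < n)%nat /\ x i <> 0) ->
     sumR n (fun i => sumR n (fun j => x i * P i j * x j)) > 0).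

Definition W2 (n m : nat) (tl hd : nat -> nat) (B : nat -> nat -> R)
    (Xd Xd' Efd : nat -> R) (eta etab V Vb : nat -> R) : R :=
  - sumR m (fun k => gamma tl hd B V k * cos (eta k))
  + sumR m (fun k => gamma tl hd B Vb k * cos (etab k))
  - sumR m (fun k => gamma tl hd B Vb k * sin (etab k) * (eta k - etab k))
  - sumR n (fun i => Efd i * (V i - Vb i))
  + / 2 * sumR n (fun i => V i * Fdiag B Xd Xd' i * V i)
  - / 2 * sumR n (fun i => Vb i * Fdiag B Xd Xd' i * Vb i).

Definition strict_local_min (n m : nat) (f : (nat -> R) -> (nat -> R) -> R)
    (etab Vb : nat -> R) : Prop :=
  exists delta, delta > 0 /\
    forall eta V : nat -> R,
      (forall k, (k < m)%nat -> Rabs (eta k - etab k) < delta) ->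
      (forall i, (i < n)%nat -> Rabs (V i - Vb i) < delta) ->
      ((exists k, (k < m)%nat /\ eta k <> etab k) \/
       (exists i, (i < n)%nat /\ V i <> Vb i)) ->
      f eta V > f etab Vb.

(* Main.v *)
Require Import Defs.
From Stdlib Require Import Reals Lra Lia Psatz Bool Arith.
Open Scope R_scope.
Lemma abs_le a r : Rabs a <= r -> -r <= a <= r.
Proof. unfold Rabs; destruct Rcase_abs; lra. Qed.
Lemma cosb a : Rabs a <= 1 -> a*a/2 - a*a*a*a/24 <= 1 - cos a <= a*a/2.
Proof. intros H. apply abs_le in H.
 destruct (pre_cos_bound a 0) as [H1 H2]; try lra.
 unfold cos_approx, cos_term in *; simpl in *. split; lra.
Qed.
Lemma sinb0 a : 0 <= a <= 1 -> a - a*a*a/6 <= sin a <= a.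
Proof. intros H.
 destruct (pre_sin_bound a 0) as [H1 H2]; try lra.
 unfold sin_approx, sin_term in *; simpl in *. split; [lra|].
 assert (a*a*a*a*a <= a*a*a*20).
 { assert (0 <= a*a*a) by (apply Rmult_le_pos; [apply Rmult_le_pos|];lra).
   assert (a*a <= 20) by nra. nra. }
 lra.
Qed.
Lemma sinb a : Rabs a <= 1 -> Rabs (sin a - a) <= a*a*Rabs a/6.
Proof. intros H. unfold Rabs in *. destruct (Rcase_abs a).
 - pose proof (sinb0 (-a)). rewrite sin_neg in H0.
   destruct (Rcase_abs (sin a - a)); nra.
 - pose proof (sinb0 a). destruct (Rcase_abs (sin a - a)); nra.
Qed.

Lemma quad_lb A a b : A > 0 -> A*(a*a) + b*a >= - (b*b) * / (4*A).
Proof. intros HA.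
 pose proof (Rle_0_sqr (2*A*a+b)) as Hsq. unfold Rsqr in Hsq.
 assert (E1 : - (b*b) * / (4*A) = A*(a*a)+b*a - (2*A*a+b)*(2*A*a+b) * / (4*A)) by (field; lra).
 rewrite E1.
 assert (0 <= (2*A*a+b)*(2*A*a+b) * / (4*A)).
 { apply Rmult_le_pos; [lra|]. left; apply Rinv_0_lt_compat; lra. }
 lra.
Qed.

Lemma edge_lemma G e eps : G > 0 -> cos e > 0 -> eps > 0 ->
  exists r, 0 < r /\ exists mu, 0 < mu /\ forall a ut uh,
   Rabs a < r -> Rabs ut < r -> Rabs uh < r ->
   G*(cos e - cos (e+a) - sin e * a) - G*(ut+uh+ut*uh)*(cos (e+a) - cos e)
   >= mu*(a*a) - G*(sin e * sin e)*((ut+uh)*(ut+uh)) * / (2*cos e) - eps*(ut*ut+uh*uh).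
Proof.
 intros HG Hc He.
 set (c := cos e). set (s := sin e). fold c in Hc.
 assert (Hc1 : c <= 1) by (apply COS_bound).
 assert (Hs1 : s*s <= 1) by (pose proof (sin2_cos2 e); unfold Rsqr in *; fold s c in H; nra).
 assert (Hsa : Rabs s <= 1) by (pose proof (SIN_bound e); unfold Rabs; destruct Rcase_abs; fold s in H; lra).
 set (lam := Rmin (1/4) (c*eps/(12*G))).
 assert (Hl0 : 0 < lam). { unfold lam, Rmin; destruct Rle_dec; [lra|]. unfold Rdiv; apply Rmult_lt_0_compat; [apply Rmult_lt_0_compat; lra| apply Rinv_0_lt_compat; lra]. }
 assert (Hl1 : lam <= 1/4) by apply Rmin_l.
 assert (Hl2 : 12*G*lam <= c*eps).
 { assert (lam <= c*eps/(12*G)) by apply Rmin_r.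
   assert (c*eps/(12*G)*(12*G) = c*eps) by (field; lra). nra. }
 set (r := Rmin 1 (Rmin (lam*c/8) (c*eps*lam/(2*G*(1+lam))))).
 assert (Hr0 : 0 < r).
 { unfold r. apply Rmin_pos; [lra|]. apply Rmin_pos.
   unfold Rdiv; apply Rmult_lt_0_compat; [apply Rmult_lt_0_compat|]; lra.
   unfold Rdiv; apply Rmult_lt_0_compat; [repeat apply Rmult_lt_0_compat; lra| apply Rinv_0_lt_compat; repeat apply Rmult_lt_0_compat; lra]. }
 assert (Hr1 : r <= 1) by apply Rmin_l.
 assert (Hr2 : r <= lam*c/8) by (eapply Rle_trans; [apply Rmin_r| apply Rmin_l]).
 assert (Hr3 : 2*G*(1+lam)*r <= c*eps*lam).
 { assert (r <= c*eps*lam/(2*G*(1+lam))) by (eapply Rle_trans; [apply Rmin_r| apply Rmin_r]).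
   assert (c*eps*lam/(2*G*(1+lam))*(2*G*(1+lam)) = c*eps*lam) by (field; nra).
   assert (0 < 2*G*(1+lam)) by nra. nra. }
 exists r; split; [exact Hr0|].
 exists (lam*G*c/2); split; [nra|].
 intros a ut uh Ha Hut Huh.
 set (C := 1 - cos a). set (D := sin a - a).
 set (p := ut+uh). set (q := ut*uh). set (U := ut*ut+uh*uh).
 assert (Hid : G*(c - cos (e+a) - s * a) - G*(p+q)*(cos (e+a) - c)
   = G*(c*C + s*D) + G*(p+q)*(c*C+s*D) + G*(p+q)*s*a).
 { rewrite cos_plus. fold c s. unfold C, D, p, q. ring. }
 rewrite Hid. clear Hid.
 assert (Ha1 : Rabs a <= 1) by lra.
 pose proof (cosb a Ha1) as [HC1 HC2]. fold C in HC1, HC2. clearbody lam r c s.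
 pose proof (sinb a Ha1) as HD. fold D in HD.
 assert (HC0 : 0 <= C).
 { pose proof (COS_bound a). assert (HCd : C = 1 - cos a) by reflexivity. clearbody C. lra. }
 assert (HDd : D = sin a - a) by reflexivity.
 assert (Hpd : p = ut+uh) by reflexivity. assert (Hqd : q = ut*uh) by reflexivity.
 assert (HUd : U = ut*ut+uh*uh) by reflexivity.
 clearbody C D p q U.
 set (Aa := Rabs a). assert (HAd : Aa = Rabs a) by reflexivity. clearbody Aa.
 assert (HA0 : 0 <= Aa) by (rewrite HAd; apply Rabs_pos).
 assert (HAr : Aa < r) by lra.
 assert (Haa : a*a = Aa*Aa) by (rewrite HAd; unfold Rabs; destruct Rcase_abs; ring).
 assert (HsD : Rabs (s*D) <= Aa*Aa*Aa/6).
 { rewrite Rabs_mult. assert (0 <= Rabs D) by apply Rabs_pos.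
   rewrite <- HAd, Haa in HD. assert (Rabs s * Rabs D <= 1 * Rabs D) by (apply Rmult_le_compat_r; lra). lra. }
 apply abs_le in HsD.
 assert (HAut : Rabs ut <= r) by lra. assert (HAuh : Rabs uh <= r) by lra.
 assert (HP : Rabs (p+q) <= 3*r).
 { rewrite Hpd, Hqd. eapply Rle_trans; [apply Rabs_triang|].
   eapply Rle_trans; [apply Rplus_le_compat; [apply Rabs_triang| rewrite Rabs_mult; apply Rmult_le_compat; try apply Rabs_pos; eassumption]|].
   assert (r*r <= r) by nra. lra. }
 assert (HcCsD : Rabs (c*C+s*D) <= Aa*Aa*(2/3)).
 { unfold Rabs at 1. assert (c*C <= Aa*Aa/2) by (rewrite Haa in HC2; nra).
   assert (0 <= c*C) by nra. assert (Aa*Aa*Aa <= Aa*Aa) by nra.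
   destruct Rcase_abs; lra. }
 assert (HX2 : (p+q)*(c*C+s*D) >= -(2*r*(Aa*Aa))).
 { assert (Rabs ((p+q)*(c*C+s*D)) <= 3*r*(Aa*Aa*(2/3))).
   { rewrite Rabs_mult. apply Rmult_le_compat; try apply Rabs_pos; assumption. }
   apply abs_le in H. lra. }
 assert (HX1 : c*C+s*D >= c*(Aa*Aa)/2 - Aa*Aa*r/24 - Aa*Aa*r/6).
 { rewrite Haa in HC1. assert (Aa*Aa*Aa*Aa <= Aa*Aa*r) by nra.
   assert (c*(Aa*Aa*Aa*Aa) <= Aa*Aa*r) by nra. assert (Aa*Aa*Aa <= Aa*Aa*r) by nra. nra. }
 assert (HX : G*(c*C + s*D) + G*(p+q)*(c*C+s*D) >= (1-lam)*G*c/2*(Aa*Aa)).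
 { assert (G*(p+q)*(c*C+s*D) >= - (G*(2*r*(Aa*Aa)))) by nra.
   assert (G*(c*C+s*D) >= G*(c*(Aa*Aa)/2 - Aa*Aa*r/24 - Aa*Aa*r/6)) by nra.
   assert (G*(Aa*Aa)*(3*r) <= G*(Aa*Aa)*(lam*c/2)) by (apply Rmult_le_compat_l; nra).
   nra. }
 rewrite Haa.
 set (Aa' := (1-2*lam)*G*c/2). assert (HAbd : Aa' = (1-2*lam)*G*c/2) by reflexivity. clearbody Aa'.
 assert (HAb0 : Aa' > 0) by (rewrite HAbd; assert (0 < G*c) by nra; nra).
 set (b := G*(p+q)*s). assert (Hbd : b = G*(p+q)*s) by reflexivity. clearbody b.
 pose proof (quad_lb Aa' a b HAb0) as Hq. rewrite Haa in Hq.
 assert (Hgoal2 : b*b <= 4*Aa'*(G*(s*s)*(p*p)*/(2*c) + eps*U)).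
 { assert (ER : 4*Aa'*(G*(s*s)*(p*p)*/(2*c) + eps*U) = (1-2*lam)*(G*G)*(s*s)*(p*p) + 2*(1-2*lam)*G*c*eps*U)
     by (rewrite HAbd; field; lra).
   rewrite ER, Hbd.
   set (K := / lam). assert (HK : lam * K = 1) by (unfold K; field; lra). clearbody K.
   assert (HK0 : 0 < K) by nra.
   assert (h1 : 2*p*q <= lam*(p*p) + K*(q*q)).
   { assert (0 <= lam*((p - K*q)*(p-K*q))) by (apply Rmult_le_pos; [lra| pose proof (Rle_0_sqr (p-K*q)); unfold Rsqr in *; lra]).
     assert (lam*((p - K*q)*(p-K*q)) = lam*(p*p) - 2*(lam*K)*p*q + (lam*K)*K*(q*q)) by ring.
     rewrite HK in H0. nra. }
   assert (h2 : p*p <= 2*U) by (rewrite Hpd, HUd; pose proof (Rle_0_sqr (ut-uh)); unfold Rsqr in *; nra).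
   assert (h3 : q*q <= r*U).
   { rewrite Hqd, HUd. apply abs_le in HAuh. assert (uh*uh <= r*r) by nra.
     assert (uh*uh <= r) by nra. assert (0 <= ut*ut) by nra. assert (0<=uh*uh) by nra.
     assert (ut*uh*(ut*uh) = (ut*ut)*(uh*uh)) by ring. rewrite H3.
     assert ((ut*ut)*(uh*uh) <= (ut*ut)*r) by (apply Rmult_le_compat_l; lra). nra. }
   assert (hU : 0 <= U) by (rewrite HUd; nra).
   set (Y := 3*lam*(p*p) + (1+K)*(q*q)).
   assert (h4 : (p+q)*(p+q) - (1-2*lam)*(p*p) <= Y) by (unfold Y; nra).
   assert (hY : 0 <= Y) by (unfold Y; nra).
   assert (h5 : G*Y <= c*eps*U).
   { unfold Y.
     assert (G*(3*lam*(p*p)) <= c*eps/2*U).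
     { assert (0 <= G*lam) by nra.
       assert ((3*(G*lam))*(p*p) <= (3*(G*lam))*(2*U)) by (apply Rmult_le_compat_l; lra).
       assert ((6*(G*lam))*U <= (c*eps/2)*U) by (apply Rmult_le_compat_r; lra).
       assert (G*(3*lam*(p*p)) = (3*(G*lam))*(p*p)) by ring.
       assert ((3*(G*lam))*(2*U) = (6*(G*lam))*U) by ring. lra. }
     assert (2*G*(1+lam)*r*K <= c*eps*lam*K) by (apply Rmult_le_compat_r; lra).
     assert (2*G*(1+K)*r <= c*eps) by (assert (2*G*(1+lam)*r*K = 2*G*(K + lam*K)*r) by ring; rewrite HK in *; nra).
     assert (G*((1+K)*(q*q)) <= G*(1+K)*(r*U)) by (assert (0 <= G*(1+K)) by nra; rewrite <- Rmult_assoc; apply Rmult_le_compat_l; lra).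
     assert (G*(1+K)*(r*U) <= c*eps/2*U) by nra.
     lra. }
   assert (h6 : (s*s)*((p+q)*(p+q) - (1-2*lam)*(p*p)) <= Y).
   { assert (0 <= s*s) by nra.
     assert ((s*s)*((p+q)*(p+q) - (1-2*lam)*(p*p)) <= (s*s)*Y) by (apply Rmult_le_compat_l; lra).
     assert ((s*s)*Y <= 1*Y) by (apply Rmult_le_compat_r; lra). lra. }
   assert (E3 : G*(p+q)*s*(G*(p+q)*s) = (1-2*lam)*(G*G)*(s*s)*(p*p) + (G*G)*((s*s)*((p+q)*(p+q) - (1-2*lam)*(p*p)))) by ring.
   rewrite E3.
   assert ((G*G)*((s*s)*((p+q)*(p+q) - (1-2*lam)*(p*p))) <= G*(G*Y)).
   { assert (G*(G*Y) = (G*G)*Y) by ring. rewrite H. apply Rmult_le_compat_l; [nra|lra]. }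
   assert (G*(G*Y) <= G*(c*eps*U)) by (apply Rmult_le_compat_l; lra).
   assert (0 <= G*c*eps*U) by (repeat apply Rmult_le_pos; lra).
   nra. }
 assert (HI : 0 <= / (4*Aa')) by (left; apply Rinv_0_lt_compat; lra).
 assert (b*b*/(4*Aa') <= G*(s*s)*(p*p)*/(2*c) + eps*U).
 { assert (E : G*(s*s)*(p*p)*/(2*c) + eps*U = 4*Aa'*(G*(s*s)*(p*p)*/(2*c) + eps*U) */(4*Aa')) by (field; lra).
   rewrite E. apply Rmult_le_compat_r; assumption. }
 assert (lam*G*c/2*(Aa*Aa) + Aa'*(Aa*Aa) = (1-lam)*G*c/2*(Aa*Aa)) by (rewrite HAbd; field).
 lra.
Qed.

Lemma sumR_ext n f g : (forall i, (i < n)%nat -> f i = g i) -> sumR n f = sumR n g.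
Proof. induction n; simpl; intros H; [reflexivity|].
 rewrite IHn by (intros; apply H; lia). rewrite H by lia. reflexivity. Qed.
Lemma sumR_add n f g : sumR n (fun i => f i + g i) = sumR n f + sumR n g.
Proof. induction n; simpl; [lra|]. rewrite IHn; ring. Qed.
Lemma sumR_sub n f g : sumR n (fun i => f i - g i) = sumR n f - sumR n g.
Proof. induction n; simpl; [lra|]. rewrite IHn; ring. Qed.
Lemma sumR_scal n c f : sumR n (fun i => c * f i) = c * sumR n f.
Proof. induction n; simpl; [lra|]. rewrite IHn; ring. Qed.
Lemma sumR_zero n : sumR n (fun _ => 0) = 0.
Proof. induction n; simpl; [lra|]. rewrite IHn; ring. Qed.
Lemma sumR_le n f g : (forall i, (i<n)%nat -> f i <= g i) -> sumR n f <= sumR n g.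
Proof. induction n; simpl; intros H; [lra|].
 assert (sumR n f <= sumR n g) by (apply IHn; intros; apply H; lia).
 assert (f n <= g n) by (apply H; lia). lra. Qed.
Lemma sumR_nonneg n f : (forall i, (i<n)%nat -> 0 <= f i) -> 0 <= sumR n f.
Proof. intros H. rewrite <- (sumR_zero n). apply sumR_le; auto. Qed.
Lemma sumR_term_le n f j : (forall i, (i<n)%nat -> 0 <= f i) -> (j < n)%nat -> f j <= sumR n f.
Proof. induction n; simpl; intros H Hj; [lia|].
 assert (0 <= sumR n f) by (apply sumR_nonneg; intros; apply H; lia).
 destruct (Nat.eq_dec j n). subst; lra.
 assert (f j <= sumR n f) by (apply IHn; [intros; apply H; lia| lia]).
 assert (0 <= f n) by (apply H; lia). lra. Qed.
Lemma sumR_pos n f j : (forall i, (i<n)%nat -> 0 <= f i) -> (j < n)%nat -> 0 < f j -> 0 < sumR n f.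
Proof. intros H Hj Hf. pose proof (sumR_term_le n f j H Hj). lra. Qed.
Lemma sumR_swap n m f : sumR n (fun i => sumR m (fun k => f i k)) = sumR m (fun k => sumR n (fun i => f i k)).
Proof. induction n; simpl. rewrite sumR_zero; auto.
 rewrite IHn. rewrite <- sumR_add. reflexivity. Qed.
Lemma sumR_prod n g h : sumR n (fun i => sumR n (fun j => g i * h j)) = sumR n g * sumR n h.
Proof. transitivity (sumR n (fun i => g i * sumR n h)).
 apply sumR_ext; intros; rewrite <- sumR_scal; reflexivity.
 transitivity (sumR n (fun i => sumR n h * g i)). apply sumR_ext; intros; ring.
 rewrite sumR_scal; ring. Qed.
Lemma sumR_ind0 n f t : (n <= t)%nat -> sumR n (fun i => if Nat.eqb i t then f i else 0) = 0.
Proof. induction n; simpl; intros; [reflexivity|].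
 rewrite IHn by lia. destruct (Nat.eqb_spec n t); [lia|lra]. Qed.
Lemma sumR_ind n f t : (t < n)%nat -> sumR n (fun i => if Nat.eqb i t then f i else 0) = f t.
Proof. induction n; simpl; intros; [lia|].
 destruct (Nat.eq_dec t n). subst. rewrite sumR_ind0 by lia. rewrite Nat.eqb_refl. lra.
 rewrite IHn by lia. destruct (Nat.eqb_spec n t); [lia|lra]. Qed.
Lemma sumR_sq_le n y : sumR n y * sumR n y <= INR n * sumR n (fun i => y i * y i).
Proof. induction n; simpl; [lra|].
 assert (HT : 0 <= sumR n (fun i => y i * y i)) by (apply sumR_nonneg; intros; nra).
 destruct n.
 - simpl in *. lra.
 - assert (0 < INR (S n)) by (apply lt_0_INR; lia).
   change (match n with 0%nat => 1 | S _ => INR n + 1 end) with (INR (S n)) in *.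
   set (Sm := sumR (S n) y) in *. set (T := sumR (S n) (fun i => y i * y i)) in *.
   set (N := INR (S n)) in *. set (z := y (S n)) in *. clearbody Sm T N z.
   assert (N*(T + N*z*z - 2*Sm*z) >= 0).
   { assert (N*(T + N*z*z - 2*Sm*z) = N*T - Sm*Sm + (Sm - N*z)*(Sm-N*z)) by ring.
     pose proof (Rle_0_sqr (Sm - N*z)). unfold Rsqr in *. lra. }
   assert (T + N*z*z - 2*Sm*z >= 0).
   { destruct (Rle_lt_dec 0 (T + N*z*z - 2*Sm*z)); [lra|]. nra. }
   lra. Qed.

Definition Qf n (P : nat -> nat -> R) (x : nat -> R) := sumR n (fun i => sumR n (fun j => x i * P i j * x j)).
Definition nsq n (x : nat -> R) := sumR n (fun i => x i * x i).

Lemma Qf_S n P x : Qf (S n) P x = Qf n P x + sumR n (fun i => x i * P i n * x n)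
   + sumR n (fun j => x n * P n j * x j) + x n * P n n * x n.
Proof. unfold Qf. simpl. rewrite sumR_add. ring. Qed.

Lemma Qf_ext n P x y : (forall i, (i < n)%nat -> x i = y i) -> Qf n P x = Qf n P y.
Proof. intros H. unfold Qf. apply sumR_ext; intros. apply sumR_ext; intros. rewrite !H; auto. Qed.

Lemma pd_uniform n : forall P, pos_def n P -> exists c, c > 0 /\ forall x, Qf n P x >= c * nsq n x.
Proof.
 induction n; intros P [Hsym Hpd].
 - exists 1. split; [lra|]. intros x. unfold Qf, nsq; simpl. lra.
 - set (p := P n n).
   assert (Hp : p > 0).
   { set (e := fun i => if Nat.eqb i n then 1 else 0).
     assert (Hen : e n <> 0) by (unfold e; rewrite Nat.eqb_refl; lra).
     assert (H := Hpd e (ex_intro _ n (conj (Nat.lt_succ_diag_r n) Hen))).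
     fold (Qf (S n) P e) in H. rewrite Qf_S in H.
     assert (Hz : forall i, (i < n)%nat -> e i = 0) by (intros; unfold e; destruct (Nat.eqb_spec i n); [lia|auto]).
     rewrite (Qf_ext n P e (fun _ => 0)) in H by auto.
     rewrite (sumR_ext n _ (fun _ => 0)) in H by (intros; rewrite Hz; auto; ring).
     rewrite (sumR_ext n (fun j => e n * P n j * e j) (fun _ => 0)) in H by (intros; rewrite (Hz i); auto; ring).
     unfold Qf in H. rewrite (sumR_ext n _ (fun _ => 0)) in H by (intros; transitivity (sumR n (fun _:nat => 0)); [apply sumR_ext; intros; ring | apply sumR_zero]).
     rewrite sumR_zero in H. unfold e in H. rewrite Nat.eqb_refl in H. unfold p. lra. }
   set (Sc := fun i j => P i j - P i n * P n j / p).
   assert (Hid : forall x, Qf (S n) P x =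
      p * (x n + sumR n (fun j => P n j * x j) / p) * (x n + sumR n (fun j => P n j * x j) / p) + Qf n Sc x).
   { intros x. rewrite Qf_S.
     assert (E1 : sumR n (fun i => x i * P i n * x n) = x n * sumR n (fun j => P n j * x j)).
     { rewrite <- sumR_scal. apply sumR_ext; intros. rewrite (Hsym i n) by lia. ring. }
     assert (E2 : sumR n (fun j => x n * P n j * x j) = x n * sumR n (fun j => P n j * x j)).
     { rewrite <- sumR_scal. apply sumR_ext; intros. ring. }
     assert (E3 : Qf n Sc x = Qf n P x - sumR n (fun j => P n j * x j) * sumR n (fun j => P n j * x j) / p).
     { unfold Qf, Sc.
       transitivity (sumR n (fun i => sumR n (fun j => x i * P i j * x j - /p * ((P n i * x i) * (P n j * x j))))).
       { apply sumR_ext; intros i Hi; apply sumR_ext; intros j Hj. rewrite (Hsym i n) by lia. unfold Rdiv. ring. }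
       transitivity (sumR n (fun i => sumR n (fun j => x i * P i j * x j) - /p * sumR n (fun j => (P n i * x i) * (P n j * x j)))).
       { apply sumR_ext; intros. rewrite <- sumR_scal, <- sumR_sub. reflexivity. }
       rewrite sumR_sub, sumR_scal, sumR_prod. unfold Rdiv. ring. }
     rewrite E1, E2, E3. fold p. field. lra. }
   assert (HSpd : pos_def n Sc).
   { split.
     - intros i j Hi Hj. unfold Sc. rewrite (Hsym i j), (Hsym i n), (Hsym n j) by lia. unfold Rdiv; ring.
     - intros x [i0 [Hi0 Hx0]].
       set (y := fun i => if Nat.eqb i n then - (sumR n (fun j => P n j * x j) / p) else x i).
       assert (Hy : forall i, (i < n)%nat -> y i = x i) by (intros; unfold y; destruct (Nat.eqb_spec i n); [lia|auto]).
       assert (Hyi : y i0 <> 0) by (rewrite Hy; auto).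
       assert (Hi0S : (i0 < S n)%nat) by lia.
       assert (H := Hpd y (ex_intro _ i0 (conj Hi0S Hyi))).
       change (Qf (S n) P y > 0) in H.
       rewrite Hid in H.
       rewrite (sumR_ext n (fun j => P n j * y j) (fun j => P n j * x j)) in H by (intros; rewrite Hy; auto).
       rewrite (Qf_ext n Sc y x) in H by auto.
       unfold y in H. rewrite Nat.eqb_refl in H.
       fold (Qf n Sc x).
       assert (E : - (sumR n (fun j => P n j * x j) / p) + sumR n (fun j => P n j * x j) / p = 0) by ring.
       rewrite E in H. lra. }
   destruct (IHn Sc HSpd) as [c' [Hc' HQ]].
   set (A := sumR n (fun j => (P n j / p) * (P n j / p))).
   assert (HA : 0 <= A) by (apply sumR_nonneg; intros; nra).
   set (K := INR n * A).
   assert (HK : 0 <= K) by (apply Rmult_le_pos; [apply pos_INR|lra]).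
   exists (Rmin (p/2) (c'/(1+2*K))). split.
   { apply Rmin_pos; [lra|]. apply Rdiv_lt_0_compat; lra. }
   intros x.
   set (c := Rmin (p/2) (c'/(1+2*K))).
   assert (Hc1 : c <= p/2) by apply Rmin_l.
   assert (Hc2 : c*(1+2*K) <= c').
   { assert (c <= c'/(1+2*K)) by apply Rmin_r.
     assert (c'/(1+2*K)*(1+2*K) = c') by (field; lra).
     assert (c*(1+2*K) <= c'/(1+2*K)*(1+2*K)) by (apply Rmult_le_compat_r; lra). lra. }
   assert (Hc0 : 0 < c) by (apply Rmin_pos; [lra|]; apply Rdiv_lt_0_compat; lra).
   set (w := sumR n (fun j => P n j * x j) / p).
   assert (Hw : w*w <= K * nsq n x).
   { assert (Ew : w = sumR n (fun j => (P n j / p) * x j)).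
     { unfold w, Rdiv. rewrite Rmult_comm, <- sumR_scal. apply sumR_ext; intros; ring. }
     rewrite Ew. eapply Rle_trans; [apply sumR_sq_le|]. unfold K. rewrite Rmult_assoc.
     apply Rmult_le_compat_l; [apply pos_INR|].
     unfold nsq. rewrite <- sumR_scal. apply sumR_le. intros j Hj.
     assert ((P n j / p) * (P n j / p) <= A).
     { apply (sumR_term_le n (fun j => (P n j / p) * (P n j / p))); [intros; nra| auto]. }
     assert (0 <= x j * x j) by nra.
     assert ((P n j / p) * (P n j / p) * (x j * x j) <= A * (x j * x j)) by (apply Rmult_le_compat_r; lra).
     nra. }
   rewrite Hid. fold w. specialize (HQ x).
   assert (Hns : nsq (S n) x = nsq n x + x n * x n) by reflexivity.
   rewrite Hns.
   assert (HN : 0 <= nsq n x) by (apply sumR_nonneg; intros; nra).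
   set (z := x n + w). assert (Hzd : z = x n + w) by reflexivity. clearbody z.
   assert (Hxn : x n * x n <= 2*(z*z) + 2*(w*w)).
   { pose proof (Rle_0_sqr (z + w)). unfold Rsqr in *. assert (x n * x n = (z-w)*(z-w)) by (rewrite Hzd; ring). nra. }
   assert (c*(x n * x n) <= c*(2*(z*z) + 2*(K*nsq n x))) by (apply Rmult_le_compat_l; lra).
   assert (c*(1+2*K)*nsq n x <= c'*nsq n x) by (apply Rmult_le_compat_r; lra).
   assert (2*c*(z*z) <= p*(z*z)) by (apply Rmult_le_compat_r; [nra|lra]).
   nra.
Qed.

Lemma sumR_if n (b : bool) f : sumR n (fun i => if b then f i else 0) = if b then sumR n f else 0.
Proof. destruct b; [reflexivity| apply sumR_zero]. Qed.

Lemma sumR_opp n f : sumR n (fun i => - f i) = - sumR n f.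
Proof. induction n; simpl; [ring|]. rewrite IHn. ring. Qed.

Lemma sumR_mul_lr m a b f : a * sumR m f * b = sumR m (fun k => a * f k * b).
Proof. induction m; simpl; [ring|]. rewrite <- IHm. ring. Qed.

Lemma Emat_bil n m tl hd B Xd Xd' eta x y
  (Hg : forall k, (k < m)%nat -> (tl k < n)%nat /\ (hd k < n)%nat /\ tl k <> hd k)
  (HBsym : forall k, (k < m)%nat -> B (tl k) (hd k) = B (hd k) (tl k)) :
  sumR n (fun i => sumR n (fun j => x i * Emat m tl hd B Xd Xd' eta i j * y j)) =
  sumR n (fun i => Fdiag B Xd Xd' i * x i * y i)
  - sumR m (fun k => B (tl k) (hd k) * cos (eta k) * (x (tl k) * y (hd k) + x (hd k) * y (tl k))).
Proof.
 set (g := fun k i j =>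
   (if Nat.eqb i (tl k) then (if Nat.eqb j (hd k) then - B (tl k) (hd k) * cos (eta k) * x i * y j else 0) else 0)
 + (if Nat.eqb i (hd k) then (if Nat.eqb j (tl k) then - B (tl k) (hd k) * cos (eta k) * x i * y j else 0) else 0)).
 assert (Hpt : forall i j, (i < n)%nat -> (j < n)%nat ->
   x i * Emat m tl hd B Xd Xd' eta i j * y j =
   (if Nat.eqb j i then Fdiag B Xd Xd' i * x i * y i else 0) + sumR m (fun k => g k i j)).
 { intros i j Hi Hj. unfold Emat.
   destruct (Nat.eqb_spec i j) as [Eij|Eij].
   - subst j. rewrite Nat.eqb_refl.
     rewrite (sumR_ext m _ (fun _ => 0)). rewrite sumR_zero; ring.
     intros k Hk. destruct (Hg k Hk) as [_ [_ Hth]]. unfold g.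
     destruct (Nat.eqb_spec i (tl k)); destruct (Nat.eqb_spec i (hd k)); try lia; ring.
   - destruct (Nat.eqb_spec j i); [lia|].
     rewrite Rplus_0_l. rewrite sumR_mul_lr.
     apply sumR_ext. intros k Hk. destruct (Hg k Hk) as [_ [_ Hth]]. pose proof (HBsym k Hk) as Hs. unfold g.
     destruct (Nat.eqb_spec (tl k) i); destruct (Nat.eqb_spec (hd k) j);
     destruct (Nat.eqb_spec (tl k) j); destruct (Nat.eqb_spec (hd k) i);
     destruct (Nat.eqb_spec i (tl k)); destruct (Nat.eqb_spec j (hd k));
     destruct (Nat.eqb_spec i (hd k)); destruct (Nat.eqb_spec j (tl k));
     simpl; try lia; subst; try rewrite Hs; ring. }
 transitivity (sumR n (fun i => sumR n (fun j => (if Nat.eqb j i then Fdiag B Xd Xd' i * x i * y i else 0) + sumR m (fun k => g k i j)))).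
 { apply sumR_ext; intros i Hi; apply sumR_ext; intros j Hj; apply Hpt; auto. }
 transitivity (sumR n (fun i => Fdiag B Xd Xd' i * x i * y i + sumR m (fun k => sumR n (fun j => g k i j)))).
 { apply sumR_ext; intros i Hi. rewrite sumR_add. rewrite sumR_ind by auto. rewrite sumR_swap. reflexivity. }
 rewrite sumR_add, sumR_swap. unfold Rminus. f_equal.
 rewrite <- sumR_opp. apply sumR_ext. intros k Hk. destruct (Hg k Hk) as [Ht [Hh Hth]].

 unfold g. 
 transitivity (sumR n (fun i => (if Nat.eqb i (tl k) then sumR n (fun j => if Nat.eqb j (hd k) then - B (tl k) (hd k) * cos (eta k) * x i * y j else 0) else 0)
     + (if Nat.eqb i (hd k) then sumR n (fun j => if Nat.eqb j (tl k) then - B (tl k) (hd k) * cos (eta k) * x i * y j else 0) else 0))).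
 { apply sumR_ext; intros i Hi. rewrite sumR_add, !sumR_if. reflexivity. }
 rewrite sumR_add.
 rewrite (sumR_ind n (fun i => sumR n (fun j => if Nat.eqb j (hd k) then - B (tl k) (hd k) * cos (eta k) * x i * y j else 0))) by auto.
 rewrite (sumR_ind n (fun i => sumR n (fun j => if Nat.eqb j (tl k) then - B (tl k) (hd k) * cos (eta k) * x i * y j else 0))) by auto.
 rewrite (sumR_ind n (fun j => - B (tl k) (hd k) * cos (eta k) * x (tl k) * y j)) by auto.
 rewrite (sumR_ind n (fun j => - B (tl k) (hd k) * cos (eta k) * x (hd k) * y j)) by auto.
 ring.
Qed.

Lemma absD_pt tl hd i k z : tl k <> hd k ->
  absD tl hd i k * z = (if Nat.eqb i (tl k) then z else 0) + (if Nat.eqb i (hd k) then z else 0).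
Proof. intros H. unfold absD, Dinc.
 destruct (Nat.eqb_spec i (tl k)); destruct (Nat.eqb_spec i (hd k)); try lia;
 try (unfold Rabs; destruct Rcase_abs); lra. Qed.

Lemma absD_sum n tl hd k z : (tl k < n)%nat -> (hd k < n)%nat -> tl k <> hd k ->
  sumR n (fun i => absD tl hd i k * z i) = z (tl k) + z (hd k).
Proof. intros. rewrite (sumR_ext n _ (fun i => (if Nat.eqb i (tl k) then z i else 0) + (if Nat.eqb i (hd k) then z i else 0))).
 rewrite sumR_add, !sumR_ind; auto.
 intros i Hi. rewrite absD_pt by auto. destruct (Nat.eqb_spec i (tl k)); destruct (Nat.eqb_spec i (hd k)); subst; reflexivity. Qed.

Lemma Pmat_bil n m tl hd B Xd Xd' eta V x
  (Hg : forall k, (k < m)%nat -> (tl k < n)%nat /\ (hd k < n)%nat /\ tl k <> hd k) :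
  sumR n (fun i => sumR n (fun j => x i * Pmat m tl hd B Xd Xd' eta V i j * x j)) =
  sumR n (fun i => sumR n (fun j => x i * Emat m tl hd B Xd Xd' eta i j * x j))
  - sumR m (fun k => gamma tl hd B V k * sin (eta k) * / cos (eta k) * sin (eta k)
        * ((x (tl k) / V (tl k) + x (hd k) / V (hd k)) * (x (tl k) / V (tl k) + x (hd k) / V (hd k)))).
Proof.
 set (w := fun k => gamma tl hd B V k * sin (eta k) * / cos (eta k) * sin (eta k)).
 set (z := fun i => x i / V i).
 transitivity (sumR n (fun i => sumR n (fun j => x i * Emat m tl hd B Xd Xd' eta i j * x j
     - sumR m (fun k => w k * (absD tl hd i k * z i) * (absD tl hd j k * z j))))).
 { apply sumR_ext; intros i Hi; apply sumR_ext; intros j Hj. unfold Pmat.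
   assert (E : x i * (/ V i * sumR m (fun k => absD tl hd i k * gamma tl hd B V k * sin (eta k) * / cos (eta k) * sin (eta k) * absD tl hd j k) * / V j) * x j
     = (x i * / V i) * sumR m (fun k => absD tl hd i k * gamma tl hd B V k * sin (eta k) * / cos (eta k) * sin (eta k) * absD tl hd j k) * (/ V j * x j)) by ring.
   transitivity (x i * Emat m tl hd B Xd Xd' eta i j * x j - x i * (/ V i * sumR m (fun k => absD tl hd i k * gamma tl hd B V k * sin (eta k) * / cos (eta k) * sin (eta k) * absD tl hd j k) * / V j) * x j).
   { ring. }
   rewrite E, sumR_mul_lr. f_equal. apply sumR_ext; intros k Hk. unfold w, z, Rdiv. ring. }
 rewrite (sumR_ext n _ (fun i => sumR n (fun j => x i * Emat m tl hd B Xd Xd' eta i j * x j)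
     - sumR m (fun k => sumR n (fun j => w k * (absD tl hd i k * z i) * (absD tl hd j k * z j))))).
 2:{ intros i Hi. rewrite sumR_sub, sumR_swap. reflexivity. }
 rewrite sumR_sub, (sumR_swap n m). f_equal. apply sumR_ext; intros k Hk. destruct (Hg k Hk) as [Ht [Hh Hth]].
 rewrite (sumR_ext n _ (fun i => sumR n (fun j => (absD tl hd i k * z i) * (w k * (absD tl hd j k * z j))))).
 2:{ intros i Hi. apply sumR_ext; intros; ring. }
 rewrite sumR_prod, sumR_scal, absD_sum by auto. unfold w, z. ring.
Qed.

Lemma sumR_const m c : sumR m (fun _ => c) = INR m * c.
Proof. induction m; simpl sumR; [simpl; ring|]. rewrite IHm, S_INR. ring. Qed.

Lemma min_combine m (Q : nat -> R -> Prop) :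
  (forall k, (k<m)%nat -> exists r, 0<r /\ Q k r) ->
  (forall k r r', Q k r -> 0 < r' -> r' <= r -> Q k r') ->
  exists r, 0 < r /\ forall k, (k<m)%nat -> Q k r.
Proof. intros H Hmon. induction m.
 - exists 1. split; [lra| intros; lia].
 - destruct IHm as [r1 [Hr1 H1]]. intros; apply H; lia.
   destruct (H m (Nat.lt_succ_diag_r m)) as [r2 [Hr2 H2]].
   exists (Rmin r1 r2). split. apply Rmin_pos; auto.
   intros k Hk. destruct (Nat.eq_dec k m).
   + subst. apply (Hmon m r2); auto. apply Rmin_pos; auto. apply Rmin_r.
   + apply (Hmon k r1); [apply H1; lia| apply Rmin_pos; auto| apply Rmin_l].
Qed.

Definition hexp (G e a ut uh : R) :=
  G*(cos e - cos (e+a) - sin e * a) - G*(ut+uh+ut*uh)*(cos (e+a) - cos e).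

Definition Hx (G e ep a ut uh : R) :=
  hexp G e a ut uh + G*(sin e * sin e)*((ut+uh)*(ut+uh)) * / (2*cos e) + ep*(ut*ut+uh*uh).

Lemma Rabs_div_lt x V r : V > 0 -> Rabs x < r * V -> Rabs (x / V) < r.
Proof. intros HV Hx. unfold Rdiv. rewrite Rabs_mult, (Rabs_pos_eq (/V)) by (left; apply Rinv_0_lt_compat; lra).
 assert (Rabs x * / V < r * V * / V) by (apply Rmult_lt_compat_r; [apply Rinv_0_lt_compat|]; lra).
 assert (r * V * / V = r) by (field; lra). lra. Qed.

Theorem lemma2 (n m : nat) (tl hd : nat -> nat) (B : nat -> nat -> R)
    (Xd Xd' Efd : nat -> R) (etab Vb : nat -> R)
    (Hgraph : is_graph n m tl hd)
    (Hconn : connected n m tl hd)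
    (HBsym : forall k, (k < m)%nat -> B (tl k) (hd k) = B (hd k) (tl k))
    (HBpos : forall k, (k < m)%nat -> B (tl k) (hd k) > 0)
    (HBself : forall i, (i < n)%nat -> B i i < 0 /\
       Rabs (B i i) > sumR m (fun k =>
         if Nat.eqb (tl k) i then Rabs (B i (hd k))
         else if Nat.eqb (hd k) i then Rabs (B i (tl k)) else 0))
    (HX : forall i, (i < n)%nat -> Xd i > Xd' i /\ Xd' i > 0)
    (Hetab : forall k, (k < m)%nat -> - (PI / 2) < etab k < PI / 2)
    (HVb : forall i, (i < n)%nat -> Vb i > 0)
    (Heq : forall i, (i < n)%nat ->
       sumR n (fun j => Emat m tl hd B Xd Xd' etab i j * Vb j) = Efd i)
    (Hpd : pos_def n (Pmat m tl hd B Xd Xd' etab Vb)) :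
  strict_local_min n m
    (fun eta V => W2 n m tl hd B Xd Xd' Efd eta etab V Vb) etab Vb.
Proof.
 destruct Hgraph as [Hg _].
 assert (Hc : forall k, (k<m)%nat -> cos (etab k) > 0) by (intros k Hk; apply cos_gt_0; apply Hetab; auto).
 assert (Hgam : forall k, (k<m)%nat -> gamma tl hd B Vb k > 0).
 { intros k Hk. destruct (Hg k Hk) as [Ht [Hh _]]. unfold gamma.
   pose proof (HVb _ Ht); pose proof (HVb _ Hh); pose proof (HBpos k Hk).
   apply Rmult_lt_0_compat; [apply Rmult_lt_0_compat|]; lra. }
 destruct (pd_uniform n _ Hpd) as [cP [HcP HQP]].
 set (eps := fun k => cP / (8 * (INR m + 1)) / (/ (Vb (tl k) * Vb (tl k)) + / (Vb (hd k) * Vb (hd k)))).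
 assert (Hm1 : 0 < INR m + 1) by (pose proof (pos_INR m); lra).
 assert (Heps : forall k, (k<m)%nat -> eps k > 0).
 { intros k Hk. destruct (Hg k Hk) as [Ht [Hh _]]. pose proof (HVb _ Ht); pose proof (HVb _ Hh).
   unfold eps. assert (0 < / (Vb (tl k) * Vb (tl k))) by (apply Rinv_0_lt_compat; nra).
   assert (0 < / (Vb (hd k) * Vb (hd k))) by (apply Rinv_0_lt_compat; nra).
   unfold Rdiv. apply Rmult_lt_0_compat; [apply Rmult_lt_0_compat|]; try lra.
   apply Rinv_0_lt_compat; lra. apply Rinv_0_lt_compat; lra. }
 set (Q := fun k r => forall a vt vh, Rabs a < r -> Rabs vt < r -> Rabs vh < r ->
    0 <= Hx (gamma tl hd B Vb k) (etab k) (eps k) a (vt / Vb (tl k)) (vh / Vb (hd k)) /\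
    (a <> 0 -> 0 < Hx (gamma tl hd B Vb k) (etab k) (eps k) a (vt / Vb (tl k)) (vh / Vb (hd k)))).
 assert (HQex : forall k, (k<m)%nat -> exists r, 0 < r /\ Q k r).
 { intros k Hk. destruct (Hg k Hk) as [Ht [Hh _]]. pose proof (HVb _ Ht); pose proof (HVb _ Hh).
   destruct (edge_lemma (gamma tl hd B Vb k) (etab k) (eps k) (Hgam k Hk) (Hc k Hk) (Heps k Hk))
     as [r [Hr [mu [Hmu Hedge]]]].
   exists (Rmin r (Rmin (r * Vb (tl k)) (r * Vb (hd k)))). split.
   { apply Rmin_pos; [lra|]. apply Rmin_pos; nra. }
   intros a vt vh Ha Hvt Hvh.
   assert (Ha' : Rabs a < r) by (pose proof (Rmin_l r (Rmin (r * Vb (tl k)) (r * Vb (hd k)))); lra).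
   assert (Hvt' : Rabs (vt / Vb (tl k)) < r).
   { apply Rabs_div_lt; auto. pose proof (Rmin_r r (Rmin (r * Vb (tl k)) (r * Vb (hd k)))).
     pose proof (Rmin_l (r * Vb (tl k)) (r * Vb (hd k))). lra. }
   assert (Hvh' : Rabs (vh / Vb (hd k)) < r).
   { apply Rabs_div_lt; auto. pose proof (Rmin_r r (Rmin (r * Vb (tl k)) (r * Vb (hd k)))).
     pose proof (Rmin_r (r * Vb (tl k)) (r * Vb (hd k))). lra. }
   specialize (Hedge a _ _ Ha' Hvt' Hvh'). fold (hexp (gamma tl hd B Vb k) (etab k) a (vt / Vb (tl k)) (vh / Vb (hd k))) in Hedge.
   unfold Hx. split.
   - assert (0 <= mu * (a*a)) by (apply Rmult_le_pos; nra). lra.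
   - intros Ha0. assert (0 < mu * (a*a)) by (apply Rmult_lt_0_compat; [lra|]; nra). lra. }
 assert (HQmon : forall k r r', Q k r -> 0 < r' -> r' <= r -> Q k r').
 { intros k r r' HQk _ Hr' a vt vh Ha Hvt Hvh. apply HQk; lra. }
 destruct (min_combine m Q HQex HQmon) as [r0 [Hr0 HQ]].
 exists r0. split; [exact Hr0|].
 intros eta V Heta HV Hne. cbv beta.
 assert (W0 : W2 n m tl hd B Xd Xd' Efd etab etab Vb Vb = 0).
 { unfold W2.
   rewrite (sumR_ext m (fun k => gamma tl hd B Vb k * sin (etab k) * (etab k - etab k)) (fun _ => 0)) by (intros; ring).
   rewrite (sumR_ext n (fun i => Efd i * (Vb i - Vb i)) (fun _ => 0)) by (intros; ring).
   rewrite !sumR_zero. ring. }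
 rewrite W0.
 pose proof (Emat_bil n m tl hd B Xd Xd' etab (fun i => V i - Vb i) Vb Hg HBsym) as E1. cbv beta in E1.
 pose proof (Emat_bil n m tl hd B Xd Xd' etab (fun i => V i - Vb i) (fun i => V i - Vb i) Hg HBsym) as E2. cbv beta in E2.
 pose proof (Pmat_bil n m tl hd B Xd Xd' etab Vb (fun i => V i - Vb i) Hg) as E3. cbv beta in E3.
 assert (SEfd : sumR n (fun i => Efd i * (V i - Vb i)) =
    sumR n (fun i => sumR n (fun j => (V i - Vb i) * Emat m tl hd B Xd Xd' etab i j * Vb j))).
 { apply sumR_ext; intros i Hi. rewrite <- (Heq i Hi). rewrite Rmult_comm, <- sumR_scal.
   apply sumR_ext; intros; ring. }
 assert (SVV : sumR n (fun i => V i * Fdiag B Xd Xd' i * V i) =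
    sumR n (fun i => Vb i * Fdiag B Xd Xd' i * Vb i) + 2 * sumR n (fun i => Fdiag B Xd Xd' i * (V i - Vb i) * Vb i)
    + sumR n (fun i => Fdiag B Xd Xd' i * (V i - Vb i) * (V i - Vb i))).
 { rewrite <- sumR_scal, <- !sumR_add. apply sumR_ext; intros; ring. }
 set (ut := fun k => (V (tl k) - Vb (tl k)) / Vb (tl k)).
 set (uh := fun k => (V (hd k) - Vb (hd k)) / Vb (hd k)).
 assert (SE : sumR m (fun k => gamma tl hd B V k * cos (eta k)) =
   sumR m (fun k => gamma tl hd B Vb k * cos (etab k))
   - sumR m (fun k => gamma tl hd B Vb k * sin (etab k) * (eta k - etab k))
   + sumR m (fun k => B (tl k) (hd k) * cos (etab k) * ((V (tl k) - Vb (tl k)) * Vb (hd k) + (V (hd k) - Vb (hd k)) * Vb (tl k)))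
   + / 2 * sumR m (fun k => B (tl k) (hd k) * cos (etab k) * ((V (tl k) - Vb (tl k)) * (V (hd k) - Vb (hd k)) + (V (hd k) - Vb (hd k)) * (V (tl k) - Vb (tl k))))
   - sumR m (fun k => Hx (gamma tl hd B Vb k) (etab k) (eps k) (eta k - etab k) (ut k) (uh k))
   + / 2 * sumR m (fun k => gamma tl hd B Vb k * sin (etab k) * / cos (etab k) * sin (etab k) *
        (((V (tl k) - Vb (tl k)) / Vb (tl k) + (V (hd k) - Vb (hd k)) / Vb (hd k)) *
         ((V (tl k) - Vb (tl k)) / Vb (tl k) + (V (hd k) - Vb (hd k)) / Vb (hd k))))
   + sumR m (fun k => eps k * (ut k * ut k + uh k * uh k))).
 { rewrite <- !sumR_scal. repeat (rewrite <- sumR_sub || rewrite <- sumR_add).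
   apply sumR_ext; intros k Hk. destruct (Hg k Hk) as [Ht [Hh _]].
   pose proof (HVb _ Ht); pose proof (HVb _ Hh); pose proof (Hc k Hk).
   unfold Hx, hexp, ut, uh, gamma.
   replace (etab k + (eta k - etab k)) with (eta k) by ring.
   field. repeat split; lra. }
 assert (Wid : W2 n m tl hd B Xd Xd' Efd eta etab V Vb =
   / 2 * sumR n (fun i => sumR n (fun j => (V i - Vb i) * Pmat m tl hd B Xd Xd' etab Vb i j * (V j - Vb j)))
   + sumR m (fun k => Hx (gamma tl hd B Vb k) (etab k) (eps k) (eta k - etab k) (ut k) (uh k))
   - sumR m (fun k => eps k * (ut k * ut k + uh k * uh k))).
 { unfold W2. rewrite SE, SEfd, E1, SVV, E3, E2. lra. }
 rewrite Wid.
 set (Ssq := sumR n (fun i => (V i - Vb i) * (V i - Vb i))).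
 assert (HS0 : 0 <= Ssq) by (unfold Ssq; apply sumR_nonneg; intros; pose proof (Rle_0_sqr (V i - Vb i)); unfold Rsqr in *; lra).
 assert (HP : sumR n (fun i => sumR n (fun j => (V i - Vb i) * Pmat m tl hd B Xd Xd' etab Vb i j * (V j - Vb j))) >= cP * Ssq).
 { pose proof (HQP (fun i => V i - Vb i)) as H. unfold Qf, nsq in H. cbv beta in H. exact H. }
 assert (HSt : forall i, (i < n)%nat -> (V i - Vb i) * (V i - Vb i) <= Ssq).
 { intros i Hi. apply (sumR_term_le n (fun i => (V i - Vb i) * (V i - Vb i))); auto. intros j _; pose proof (Rle_0_sqr (V j - Vb j)); unfold Rsqr in *; lra. }
 assert (Heps_sum : sumR m (fun k => eps k * (ut k * ut k + uh k * uh k)) <= cP / 8 * Ssq).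
 { eapply Rle_trans.
   - apply (sumR_le m _ (fun _ => cP / (8 * (INR m + 1)) * Ssq)).
     intros k Hk. destruct (Hg k Hk) as [Ht [Hh _]].
     pose proof (HVb _ Ht); pose proof (HVb _ Hh). pose proof (HSt _ Ht); pose proof (HSt _ Hh).
     set (a1 := / (Vb (tl k) * Vb (tl k))). set (a2 := / (Vb (hd k) * Vb (hd k))).
     assert (Ha1 : 0 < a1) by (apply Rinv_0_lt_compat; nra).
     assert (Ha2 : 0 < a2) by (apply Rinv_0_lt_compat; nra).
     assert (E4 : ut k * ut k = (V (tl k) - Vb (tl k)) * (V (tl k) - Vb (tl k)) * a1) by (unfold ut, a1; field; lra).
     assert (E5 : uh k * uh k = (V (hd k) - Vb (hd k)) * (V (hd k) - Vb (hd k)) * a2) by (unfold uh, a2; field; lra).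
     rewrite E4, E5.
     assert (Hle : (V (tl k) - Vb (tl k)) * (V (tl k) - Vb (tl k)) * a1 + (V (hd k) - Vb (hd k)) * (V (hd k) - Vb (hd k)) * a2 <= Ssq * (a1 + a2)).
     { assert ((V (tl k) - Vb (tl k)) * (V (tl k) - Vb (tl k)) * a1 <= Ssq * a1) by (apply Rmult_le_compat_r; lra).
       assert ((V (hd k) - Vb (hd k)) * (V (hd k) - Vb (hd k)) * a2 <= Ssq * a2) by (apply Rmult_le_compat_r; lra). lra. }
     pose proof (Heps k Hk) as He.
     assert (eps k * (Ssq * (a1 + a2)) = cP / (8 * (INR m + 1)) * Ssq) by (unfold eps; fold a1 a2; field; lra).
     assert (eps k * ((V (tl k) - Vb (tl k)) * (V (tl k) - Vb (tl k)) * a1 + (V (hd k) - Vb (hd k)) * (V (hd k) - Vb (hd k)) * a2) <= eps k * (Ssq * (a1 + a2))) by (apply Rmult_le_compat_l; lra).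
     lra.
   - rewrite sumR_const.
     assert (INR m * (cP / (8 * (INR m + 1)) * Ssq) = (INR m / (INR m + 1)) * (cP / 8 * Ssq)) by (field; lra).
     rewrite H. assert (INR m / (INR m + 1) <= 1).
     { assert (INR m / (INR m + 1) * (INR m + 1) = INR m) by (field; lra).
       pose proof (pos_INR m). assert (0 <= INR m / (INR m + 1)).
       { unfold Rdiv. apply Rmult_le_pos; [lra|]. left; apply Rinv_0_lt_compat; lra. }
       nra. }
     assert (0 <= cP / 8 * Ssq) by (unfold Rdiv; apply Rmult_le_pos; [apply Rmult_le_pos|]; lra).
     nra. }
 assert (HHx : forall k, (k<m)%nat -> 0 <= Hx (gamma tl hd B Vb k) (etab k) (eps k) (eta k - etab k) (ut k) (uh k)
     /\ (eta k - etab k <> 0 -> 0 < Hx (gamma tl hd B Vb k) (etab k) (eps k) (eta k - etab k) (ut k) (uh k))).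
 { intros k Hk. destruct (Hg k Hk) as [Ht [Hh _]]. apply (HQ k Hk); auto. }
 assert (HsumHx : 0 <= sumR m (fun k => Hx (gamma tl hd B Vb k) (etab k) (eps k) (eta k - etab k) (ut k) (uh k))).
 { apply sumR_nonneg; intros k Hk; apply HHx; auto. }
 destruct Hne as [[k0 [Hk0 Hne]] | [i0 [Hi0 Hne]]].
 - assert (0 < sumR m (fun k => Hx (gamma tl hd B Vb k) (etab k) (eps k) (eta k - etab k) (ut k) (uh k))).
   { apply (sumR_pos m _ k0); auto. intros k Hk; apply HHx; auto. apply HHx; auto. lra. }
   nra.
 - assert (0 < Ssq).
   { unfold Ssq. apply (sumR_pos n _ i0); auto. intros j _; pose proof (Rle_0_sqr (V j - Vb j)); unfold Rsqr in *; lra. assert (V i0 - Vb i0 <> 0) by lra. pose proof (Rsqr_pos_lt _ H); unfold Rsqr in *; lra. }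
   nra.
Qed.
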